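(* Let $0<\alpha<1<\eta<2$ and let $D\subseteq\mathbb R^d$ have the property: for each $i\in\{1,\dots,d\}$ with $\mathfrak s_i=1$, if $x,y\in D$ then $y+d(x,y)\mathbf e_i\in D$. Then for all germs $U$ over $D$ and all $R>0$, $$\sup_{x\in D}[U_x]_{C^\alpha(D\cap B_R(x))}\lesssim\big(\|U\|_{G^\eta(D)}+[U]_{G^{\eta,\alpha}(D)}\big)R^{\eta-\alpha},$$ with an implicit constant independent of $U$, $R$ and $D$.
   Context: Fix a scaling $\mathfrak s\in\mathbb N^d$; for $\beta\in\mathbb N_0^d$, $|\beta|:=\sum_i\mathfrak s_i\beta_i$; $d(x,y):=\sum_i|x_i-y_i|^{1/\mathfrak s_i}$, $B_R(x)$ the open ball for $d$, $\mathcal P_k$ the polynomials $\sum_{|\beta|\le k}c_\beta z^\beta$. A germ over $D$ is a family $U=(U_x)_{x\in D}$ of continuous $U_x:D\to\mathbb C$; $\|U\|_{G^\eta(D)}$ is the infimum of $M>0$ with $|U_x(y)|\le M\,d(x,y)^\eta$ for all $x,y\in D$; $[U]_{G^{\eta,\alpha}(D)}$ is the infimum of $M>0$ such that for all $x,y\in D$ there is $P\in\mathcal P_{\lfloor\eta\rfloor}$ with $|(U_x-U_y-P)(z)|\le M\,d(y,z)^\alpha(d(x,y)+d(y,z))^{\eta-\alpha}$ for all $z\in D$. For $\alpha\in(0,1)$ and $A\subseteq\mathbb R^d$, $[f]_{C^\alpha(A)}:=\sup_{y,z\in A,\,y\ne z}|f(y)-f(z)|/d(y,z)^\alpha$. 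*)

(* Defs.v *)
From HB Require Import structures.
From mathcomp Require Import all_boot all_order all_algebra.
From mathcomp Require Import all_classical all_reals all_analysis.
From mathcomp Require Import complex.
Set Implicit Arguments. Unset Strict Implicit. Unset Printing Implicit Defensive.
Import Order.TTheory GRing.Theory Num.Theory.
Local Open Scope classical_set_scope.
Local Open Scope ring_scope.

Section Defs.
Variables (R : realType) (d : nat) (s : 'I_d -> nat).

Definition pt := 'I_d -> R.

Definition cmod (z : R[i]) : R := ComplexField.Normc.normc z.

Definition sdist (x y : pt) : R :=
  \sum_(i < d) powR `|x i - y i| (1 / (s i)%:R).

Definition sball (x : pt) (r : R) : set pt := [set y | sdist x y < r].

Definition evec (i : 'I_d) : pt := fun j => if j == i then 1 else 0.

(* continuity of f : D -> C (w.r.t. the metric sdist, which induces the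
   Euclidean topology) *)
Definition cont_on (D : set pt) (f : pt -> R[i]) : Prop :=
  forall y, D y -> forall eps : R, 0 < eps -> exists2 del : R, 0 < del &
    forall z, D z -> sdist y z < del -> cmod (f y - f z) < eps.

Definition is_germ (D : set pt) (U : pt -> pt -> R[i]) : Prop :=
  forall x, D x -> cont_on D (U x).

Definition Gnorm (eta : R) (D : set pt) (U : pt -> pt -> R[i]) : \bar R :=
  ereal_inf [set M%:E | M in [set M : R | 0 < M /\
     forall x y, D x -> D y -> cmod (U x y) <= M * powR (sdist x y) eta]].

Definition is_poly_k (k : nat) (P : pt -> R[i]) : Prop :=
  exists (N : nat) (beta : 'I_N -> 'I_d -> nat) (c : 'I_N -> R[i]),
    (forall n, (\sum_(i < d) s i * beta n i <= k)%N) /\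
    forall z, P z = \sum_(n < N) c n * \prod_(i < d) (((z i)%:C)%C ^+ beta n i).

Definition Gsemi (eta alpha : R) (D : set pt) (U : pt -> pt -> R[i]) : \bar R :=
  ereal_inf [set M%:E | M in [set M : R | 0 < M /\
     forall x y, D x -> D y -> exists P, is_poly_k `|Num.floor eta|%N P /\
       forall z, D z -> cmod (U x z - U y z - P z) <=
         M * powR (sdist y z) alpha * powR (sdist x y + sdist y z) (eta - alpha)]].

Definition Hsemi (alpha : R) (A : set pt) (f : pt -> R[i]) : \bar R :=
  ereal_sup [set e | exists y z, A y /\ A z /\ y <> z /\
     e = ((cmod (f y - f z)) / powR (sdist y z) alpha)%:E].

End Defs.

(* Main.v *)
Require Import Defs.
From HB Require Import structures.
From mathcomp Require Import all_boot all_order all_algebra.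
From mathcomp Require Import all_classical all_reals all_analysis.
From mathcomp Require Import complex.
From mathcomp Require Import zify ring lra.
Import Order.TTheory GRing.Theory Num.Theory.
Local Open Scope classical_set_scope.
Local Open Scope ring_scope.
Set Implicit Arguments. Unset Strict Implicit.

Section Helpers.
Variable R : realType.

Lemma cmod_ge0 (z : R[i]) : 0 <= cmod z.
Proof. by case: z => a b; rewrite /cmod /=; exact: sqrtr_ge0. Qed.

Lemma cmodD (a b : R[i]) : cmod (a + b) <= cmod a + cmod b.
Proof. exact: (@le_normcD R a b). Qed.

Lemma cmodN (a : R[i]) : cmod (- a) = cmod a.
Proof. exact: (@normcN R a). Qed.

Lemma cmodM (a b : R[i]) : cmod (a * b) = cmod a * cmod b.
Proof. exact: Normc.normcM. Qed.

Lemma cmodB (a b : R[i]) : cmod (a - b) = cmod (b - a).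
Proof. by rewrite -cmodN opprB. Qed.

Lemma cmod_real (k : R) : cmod (k%:C)%C = `|k|.
Proof. by rewrite /cmod /= expr0n /= addr0 sqrtr_sqr. Qed.

Lemma cmod0 : cmod (0 : R[i]) = 0.
Proof. exact: Normc.normc0. Qed.

Lemma cmod_eq0 (z : R[i]) : cmod z = 0 -> z = 0.
Proof. exact: Normc.eq0_normc. Qed.

Lemma powR_subadd (p a b : R) : 0 < p -> p <= 1 -> 0 <= a -> 0 <= b ->
  powR (a + b) p <= powR a p + powR b p.
Proof.
move=> p0 p1 a0 b0.
have [ab0|abp] := eqVneq (a + b) 0.
  by rewrite ab0 powR0 ?gt_eqF// addr_ge0 ?powR_ge0.
have abgt : 0 < a + b by rewrite lt_neqAle eq_sym abp addr_ge0.
set t := a / (a + b).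
have ha : a = t * (a + b) by rewrite /t mulfVK.
have hb : b = (1 - t) * (a + b) by rewrite mulrBl mul1r -ha addrC addKr.
have t0 : 0 <= t by rewrite /t divr_ge0 // ltW.
have t1 : 0 <= 1 - t by rewrite /t subr_ge0 ler_pdivrMr// mul1r lerDl.
have key : forall u, 0 <= u -> u <= 1 -> u <= powR u p.
  move=> u u0 u1; have [->|un0] := eqVneq u 0; first by rewrite powR_ge0.
  by apply: ger1_powR => //; rewrite u1 andbT lt_neqAle eq_sym un0.
have -> : powR a p + powR b p = (powR t p + powR (1-t) p) * powR (a+b) p.
  by rewrite mulrDl -!powRM ?(ltW abgt)// -ha -hb.
rewrite -{1}[powR (a+b) p]mul1r ler_wpM2r ?powR_ge0//.
rewrite -{1}(subrKC t 1); apply: lerD; apply: key => //.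
  by rewrite -subr_ge0.
by rewrite lerBlDr lerDl.
Qed.

Variables (d : nat) (s : 'I_d -> nat).
Hypothesis hs : forall i, (0 < s i)%N.

Lemma invs_gt0 i : 0 < 1 / (s i)%:R :> R.
Proof. by rewrite div1r invr_gt0 ltr0n hs. Qed.

Lemma invs_le1 i : 1 / (s i)%:R <= 1 :> R.
Proof. by rewrite div1r invf_le1 ?ler1n ?ltr0n ?hs. Qed.

Lemma sdist_ge0 (x y : pt R d) : 0 <= sdist s x y.
Proof. by apply: sumr_ge0 => i _; exact: powR_ge0. Qed.

Lemma sdist_sym (x y : pt R d) : sdist s x y = sdist s y x.
Proof. by apply: eq_bigr => i _; rewrite distrC. Qed.

Lemma sdist_xx (x : pt R d) : sdist s x x = 0.
Proof.
by rewrite /sdist big1// => i _; rewrite subrr normr0 powR0// gt_eqF// invs_gt0.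
Qed.

Lemma sdist_tri (x y z : pt R d) : sdist s x z <= sdist s x y + sdist s y z.
Proof.
rewrite /sdist -big_split /=; apply: ler_sum => i _.
have := @powR_subadd _ `|x i - y i| `|y i - z i| (invs_gt0 i) (invs_le1 i) (normr_ge0 _) (normr_ge0 _). apply: le_trans.
apply: ge0_ler_powR; rewrite ?nnegrE ?addr_ge0// ?(ltW (invs_gt0 i))//.
by rewrite (_ : x i - z i = (x i - y i) + (y i - z i)) ?ler_normD // addrA subrK.
Qed.

Lemma sdist_evec (y : pt R d) (i : 'I_d) (h : R) : s i = 1%N -> 0 <= h ->
  sdist s y (y + h *: evec R i) = h.
Proof.
move=> si h0.
have E : forall j, (y + h *: evec R i) j = y j + h * (if j == i then 1 else 0) by [].
rewrite /sdist (bigD1 i)//= big1 => [|j ji].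
  rewrite addr0 E eqxx mulr1 si opprD addrA subrr sub0r normrN ger0_norm//.
  by rewrite divr1 powRr1.
rewrite E (negbTE ji) mulr0 addr0 subrr normr0 powR0// gt_eqF// invs_gt0 //.
Qed.

Definition affC (f : pt R d -> R[i]) := exists (c0 : R[i]) (a : 'I_d -> R[i]),
  (forall i, s i != 1%N -> a i = 0) /\ forall z, f z = c0 + \sum_(i < d) a i * ((z i)%:C)%C.

Lemma aff_term (b : 'I_d -> nat) (cc : R[i]) :
  (\sum_(i < d) s i * b i <= 1)%N ->
  affC (fun z => cc * \prod_(i < d) (((z i)%:C)%C ^+ b i)).
Proof.
move=> hb.
have [/existsP [j bj]|nob] := boolP [exists j, b j != 0%N].
  have hj := hb; rewrite (bigD1 j) //= in hj.
  have sj1 : s j = 1%N.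
    have := hs j; move: bj hj; case: (s j) => [|[|k]] //; case: (b j) => //; lia.
  have bj1 : b j = 1%N.
    move: bj hj; rewrite sj1; case: (b j) => [|[|k]] //; lia.
  have bo : forall i, i != j -> b i = 0%N.
    move=> i ij; have : (s i * b i <= \sum_(i < d | i != j) s i * b i)%N.
      by rewrite (bigD1 i) //= leq_addr.
    move: hj; rewrite sj1 bj1 => hj hi.
    have hsi := hs i; have : (s i * b i <= 0)%N by apply: leq_trans hi _; move: hj; rewrite muln1 add1n ltnS.
    by rewrite leqn0 muln_eq0 => /orP[/eqP hh|/eqP->] //; rewrite hh in hsi.
  exists 0, (fun i => if i == j then cc else 0); split.
    by move=> i; case: (i =P j) => [->|] //; rewrite sj1.
  move=> z; rewrite add0r (bigD1 j) //= big1 => [|i ij]; last by rewrite bo // expr0.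
  rewrite [RHS](bigD1 j) //= big1 => [|i ij]; last by rewrite (negbTE ij) mul0r.
  by rewrite eqxx bj1 expr1 !mulr1 addr0.
exists cc, (fun _ => 0); split => // z.
rewrite [in RHS]big1 => [|i _]; last by rewrite mul0r.
rewrite big1 ?mulr1 ?addr0 // => i _.
have : ~~ (b i != 0%N) by apply: contraNN nob => bi; apply/existsP; exists i.
by rewrite negbK => /eqP ->; rewrite expr0.
Qed.

Lemma aff_sum N (beta : 'I_N -> 'I_d -> nat) (c : 'I_N -> R[i]) :
  (forall n, (\sum_(i < d) s i * beta n i <= 1)%N) ->
  affC (fun z => \sum_(n < N) c n * \prod_(i < d) (((z i)%:C)%C ^+ beta n i)).
Proof.
elim: N beta c => [|N IH] beta c hb.
  by exists 0, (fun _ => 0); split => // z; rewrite !big_ord0 big1 ?addr0 // => i _; rewrite mul0r.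
have [c1 [a1 [ha1 e1]]] := IH (fun n => beta (widen_ord (leqnSn N) n))
    (fun n => c (widen_ord (leqnSn N) n)) (fun n => hb _).
have [c2 [a2 [ha2 e2]]] := @aff_term (beta ord_max) (c ord_max) (hb ord_max).
exists (c1 + c2), (fun i => a1 i + a2 i); split.
  by move=> i si; rewrite ha1 ?ha2 ?addr0.
move=> z; rewrite big_ord_recr /= e1 e2.
under [X in _ = _ + X]eq_bigr do rewrite mulrDl.
by rewrite big_split /= addrACA.
Qed.

Lemma poly1_aff P : is_poly_k s 1 P -> affC P.
Proof.
move=> [N [beta [c [hb hP]]]].
have [c0 [a [ha e]]] := @aff_sum N beta c hb.
by exists c0, a; split => // z; rewrite hP e.
Qed.

End Helpers.

Section Core.
Variable R : realType.

Lemma floor_eta (eta : R) : 1 < eta -> eta < 2 -> `|Num.floor eta|%N = 1%N.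
Proof.
by move=> h1 h2; rewrite (@floor_def _ _ 1) //= ?(ltW h1) ?h2.
Qed.

Lemma cmod_le0 (z : R[i]) : cmod z <= 0 -> z = 0.
Proof. by move=> h; apply: cmod_eq0; apply/eqP; rewrite eq_le h cmod_ge0. Qed.

Lemma powR_kbound (k u r q : R) : 1 <= k -> 0 <= u -> u <= k * r -> 0 <= r ->
  0 <= q -> q <= 2 -> powR u q <= k ^+ 2 * powR r q.
Proof.
move=> k1 u0 ukr r0 q0 q2.
apply: (@le_trans _ _ (powR (k * r) q)).
  by apply: (ge0_ler_powR q0); rewrite ?nnegrE // mulr_ge0 // (le_trans _ k1).
rewrite powRM ?(le_trans _ k1)// ler_wpM2r ?powR_ge0//.
by rewrite -powR_mulrn ?(le_trans _ k1)// ler_powR.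
Qed.

Lemma powR_split (u a b : R) : a + b != 0 -> powR u (a + b) = powR u a * powR u b.
Proof. by move=> h; rewrite powRD// (negbTE h). Qed.

Lemma realC_sub (a b : R) : ((a - b)%:C = a%:C - b%:C)%C.
Proof. by rewrite rmorphB. Qed.


Lemma powR_mono (u v q : R) : 0 <= q -> 0 <= u -> u <= v -> powR u q <= powR v q.
Proof.
move=> q0 u0 uv; apply: (ge0_ler_powR q0); rewrite ?nnegrE //; exact: le_trans uv.
Qed.

Lemma fin_bound (M1 M2 a b X c1 c2 : R) : 0 <= M1 -> 0 <= M2 -> 0 <= a * b ->
  0 <= c1 -> c1 <= 30 -> 0 <= c2 -> c2 <= 30 ->
  X <= c1 * (M1 * (a * b)) + c2 * (M2 * (a * b)) -> X <= 30 * (M1 + M2) * b * a.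
Proof.
move=> M10 M20 ab c10 c1l c20 c2l hX.
apply: le_trans hX _.
have -> : 30 * (M1 + M2) * b * a = 30 * (M1 * (a * b)) + 30 * (M2 * (a * b)) by ring.
by apply: lerD; apply: ler_wpM2r => //; apply: mulr_ge0.
Qed.

Lemma cmod_sum (n : nat) (F : 'I_n -> R[i]) :
  cmod (\sum_(i < n) F i) <= \sum_(i < n) cmod (F i).
Proof.
elim/big_rec2: _ => [|i y1 y2 _ IH]; first by rewrite cmod0.
by apply: le_trans (cmodD _ _) _; rewrite lerD2l.
Qed.

Lemma cmod3 (a b c : R[i]) : cmod (a + b + c) <= cmod a + cmod b + cmod c.
Proof. by apply: le_trans (cmodD _ _) _; rewrite lerD2r cmodD. Qed.

Lemma cmod4 (a b c e : R[i]) : cmod (- a + b - c - e) <= cmod a + cmod b + cmod c + cmod e.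
Proof.
apply: le_trans (cmodD _ _) _; rewrite cmodN lerD2r.
apply: le_trans (cmodD _ _) _; rewrite cmodN lerD2r.
by apply: le_trans (cmodD _ _) _; rewrite cmodN.
Qed.

Lemma eq1_gen (T : comRingType) (a b c e : T) : c - e = - (a - b - c) + a - b - e.
Proof. by ring. Qed.

Lemma eq2_gen (T : comRingType) (a b c e f : T) : a = e -> a - f = - ((f - b - c) + b + (c - e)).
Proof. by move=> ->; ring. Qed.

Lemma lin3 (a b c X Y : R) : a <= 9 * Y -> b <= 4 * X -> c <= 4 * (6 * X + 4 * Y) ->
  a + b + c <= 28 * X + 25 * Y.
Proof. move=> *; lra. Qed.

Lemma lin4 (a b c e X Y : R) : a <= 4 * Y -> b <= 4 * X -> c <= X -> e <= X ->
  a + b + c + e <= 6 * X + 4 * Y.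
Proof. move=> *; lra. Qed.

Variables (d : nat) (s : 'I_d -> nat).
Hypothesis hs : forall i, (0 < s i)%N.

Lemma Pdiff (P : pt R d -> R[i]) c0 (a : 'I_d -> R[i]) :
  (forall z, P z = c0 + \sum_(i < d) a i * ((z i)%:C)%C) ->
  forall y z, P z - P y = \sum_(i < d) a i * ((z i - y i)%:C)%C.
Proof.
move=> e y z; rewrite !e opprD addrACA subrr add0r -sumrN -big_split /=.
by apply: eq_bigr => j _; rewrite realC_sub mulrBr.
Qed.

Lemma core (alpha eta M1 M2 r : R) (D : set (pt R d))
  (U : pt R d -> pt R d -> R[i]) x y z :
  0 < alpha -> alpha < 1 -> 1 < eta -> eta < 2 -> 0 <= M1 -> 0 <= M2 -> 0 < r ->
  (forall i : 'I_d, s i = 1%N ->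
       forall x y, D x -> D y -> D (y + sdist s x y *: evec R i)) ->
  (forall a b, D a -> D b -> cmod (U a b) <= M1 * powR (sdist s a b) eta) ->
  (forall a b, D a -> D b -> exists P, is_poly_k s 1 P /\
     forall c, D c -> cmod (U a c - U b c - P c) <=
       M2 * powR (sdist s b c) alpha * powR (sdist s a b + sdist s b c) (eta - alpha)) ->
  D x -> D y -> D z -> sdist s x y < r -> sdist s x z < r ->
  cmod (U x y - U x z) <= 30 * (M1 + M2) * powR r (eta - alpha) * powR (sdist s y z) alpha.
Proof.
move=> a0 a1 e1 e2 M10 M20 r0 HD HN HS Dx Dy Dz hxy hxz.
set q := eta - alpha.
have q0 : 0 <= q by rewrite /q subr_ge0 ltW // (lt_trans a1 e1).
have q2 : q <= 2 by rewrite /q; lra.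
set h := sdist s x y; set del := sdist s y z; set Rp := powR r q.
rewrite -/h in hxy.
have h0 : 0 <= h by exact: sdist_ge0.
have del0 : 0 <= del by exact: sdist_ge0.
have Rp0 : 0 <= Rp by exact: powR_ge0.
have da0 : 0 <= powR del alpha by exact: powR_ge0.
have eta0 : eta != 0 by rewrite gt_eqF // (lt_trans _ e1).
have alpha0 : alpha != 0 by rewrite gt_eqF.
have Uyy : U y y = 0.
  apply: cmod_le0; apply: le_trans (HN _ _ Dy Dy) _.
  by rewrite sdist_xx // powR0 // mulr0.
have hdel : del <= 2 * r.
  apply: le_trans (sdist_tri hs y x z) _.
  by rewrite (sdist_sym s y x) -/h; lra.
have powdel : powR del eta <= 4 * (powR del alpha * Rp).
  have -> : eta = alpha + q by rewrite /q addrC subrK.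
  rewrite powR_split; last by rewrite /q addrC subrK.
  rewrite mulrCA ler_wpM2l //.
  have h22 : (2:R) ^+ 2 = 4 by rewrite expr2; lra.
  apply: le_trans (@powR_kbound 2 del r q _ del0 hdel (ltW r0) q0 q2) _; rewrite ?h22 //; lra.
have A0 : 0 <= powR del alpha * Rp by exact: mulr_ge0.
have M1A := mulr_ge0 M10 A0; have M2A := mulr_ge0 M20 A0.
have eta0' : 0 <= eta by lra.
have Uyz : cmod (U y z) <= M1 * (4 * (powR del alpha * Rp)).
  by apply: le_trans (HN _ _ Dy Dz) _; rewrite -/del ler_wpM2l.
have n4 : (0:R) <= 4 by lra.
have n4' : (4:R) <= 30 by lra.
have n0' : (0:R) <= 30 by lra.
have [hz|hn0] := eqVneq h 0.
  have Uxy : U x y = 0.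
    by apply: cmod_le0; apply: le_trans (HN _ _ Dx Dy) _; rewrite -/h hz powR0 // mulr0.
  have dxz : sdist s x z <= del.
    by apply: le_trans (sdist_tri hs x y z) _; rewrite -/h -/del hz add0r.
  rewrite Uxy sub0r cmodN; apply: le_trans (HN _ _ Dx Dz) _.
  apply: (fin_bound (c1:=4) (c2:=0) M10 M20 A0 n4 n4' (lexx 0) n0').
  rewrite mul0r addr0.
  apply: (@le_trans _ _ (M1 * powR del eta)).
    by apply: (ler_wpM2l M10); apply: powR_mono eta0' (sdist_ge0 _ _ _) dxz.
  by rewrite mulrCA ler_wpM2l.
have hpos : 0 < h by rewrite lt_neqAle eq_sym hn0.
have [P [HP HDel]] := HS _ _ Dx Dy.
have [c0 [a [ha eP]]] := poly1_aff hs HP.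
have Py : P y = U x y.
  have := HDel _ Dy; rewrite (sdist_xx hs) powR0 // mulr0 mul0r => /cmod_le0.
  by rewrite Uyy subr0 => /eqP; rewrite subr_eq0 => /eqP ->.
set ph := powR h eta.
have n2 : (1:R) <= 2 by lra.
have n3 : (1:R) <= 3 by lra.
have h22 : (2:R) ^+ 2 = 4 by rewrite expr2; lra.
have h33 : (3:R) ^+ 2 = 9 by rewrite expr2; lra.
set K := 6 * M1 + 4 * M2.
have K0 : 0 <= K by rewrite /K; lra.
have coef : forall i, s i = 1%N -> cmod (a i) * h <= K * ph.
  move=> i si.
  set w := y + h *: evec R i.
  have E : forall j, w j = y j + h * (if j == i then 1 else 0) by [].
  have Dw : D w := HD i si x y Dx Dy.
  have dyw : sdist s y w = h := sdist_evec hs y si h0.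
  have dxw : sdist s x w <= 2 * h.
    by apply: le_trans (sdist_tri hs x y w) _; rewrite -/h dyw; lra.
  have ePw : P w - P y = a i * (h%:C)%C.
    rewrite (Pdiff eP) (bigD1 i) //= big1 => [|j ji].
      by rewrite addr0 E eqxx mulr1 addrC addKr.
    by rewrite E (negbTE ji) mulr0 addr0 subrr mulr0.
  have HDw := HDel _ Dw; rewrite dyw -/h in HDw.
  have Uxw := HN _ _ Dx Dw.
  have Uyw := HN _ _ Dy Dw; rewrite dyw -/ph in Uyw.
  have Uxy := HN _ _ Dx Dy; rewrite -/h -/ph in Uxy.
  have pxw : powR (sdist s x w) eta <= 4 * ph.
    by rewrite -h22; apply: (powR_kbound n2 (sdist_ge0 _ _ _) dxw h0 eta0' (ltW e2)).
  have phh : powR (h + h) q <= 4 * powR h q.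
    by rewrite -h22; apply: (powR_kbound n2 (addr_ge0 h0 h0) _ h0 q0 q2); rewrite mulr_natl.
  have phsplit : powR h alpha * powR h q = ph.
    by rewrite -powR_split /q (addrC alpha) subrK.
  have eq1 : P w - P y = - (U x w - U y w - P w) + U x w - U y w - U x y.
    by rewrite Py; apply: eq1_gen.
  have : cmod (a i) * h = cmod (P w - P y).
    by rewrite ePw cmodM cmod_real ger0_norm.
  move=> ->; rewrite eq1; apply: le_trans (cmod4 _ _ _ _) _.
  have B1 : cmod (U x w - U y w - P w) <= 4 * (M2 * ph).
    apply: le_trans HDw _; rewrite -phsplit.
    have := mulr_ge0 M20 (powR_ge0 h alpha).
    have := powR_ge0 h q.
    have -> : 4 * (M2 * (powR h alpha * powR h q)) = (M2 * powR h alpha) * (4 * powR h q) by ring.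
    by move=> _ hh; apply: ler_wpM2l.
  have B2 : cmod (U x w) <= 4 * (M1 * ph).
    apply: le_trans Uxw _; rewrite mulrCA; exact: ler_wpM2l.
  have Mph1 := mulr_ge0 M10 (powR_ge0 h eta).
  have Mph2 := mulr_ge0 M20 (powR_ge0 h eta).
  have -> : K * ph = 6 * (M1 * ph) + 4 * (M2 * ph) by rewrite /K; ring.
  by apply: lin4.
set phe := powR h (eta - 1).
have phe0 : 0 <= phe by exact: powR_ge0.
have coef2 : forall i, s i = 1%N -> cmod (a i) <= K * phe.
  move=> i si; have := coef i si.
  rewrite /ph -(mulr_powRB1 h0 (lt_trans ltr01 e1)) -/phe mulrCA (mulrC _ h).
  by rewrite ler_pM2l.
have coef3 : forall i, cmod (a i * ((z i - y i)%:C)%C) <=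
    K * phe * powR `|y i - z i| (1 / (s i)%:R).
  move=> i; rewrite cmodM cmod_real; have [si|si] := eqVneq (s i) 1%N.
    rewrite si divr1 powRr1 // distrC; apply: ler_wpM2r => //; exact: coef2.
  by rewrite ha // cmod0 mul0r; apply: mulr_ge0; [exact: mulr_ge0|exact: powR_ge0].
have Pzy : cmod (P z - P y) <= K * phe * del.
  rewrite (Pdiff eP) /del /sdist mulr_sumr; apply: le_trans (cmod_sum _) _.
  by apply: ler_sum => i _; exact: coef3.
have bnd3 : K * phe * del <= 4 * (K * (powR del alpha * Rp)).
  have phr : phe <= powR r (eta - 1).
    by apply: powR_mono; [rewrite subr_ge0 ltW|exact: h0|exact: ltW].
  have ea : alpha + (1 - alpha) = 1 by rewrite addrC subrK.
  have dsplit : del = powR del alpha * powR del (1 - alpha).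
    by rewrite -powR_split ea ?powRr1 ?oner_eq0.
  have p1 : powR del (1 - alpha) <= 4 * powR r (1 - alpha).
    rewrite -h22; apply: (powR_kbound n2 del0 hdel (ltW r0)); rewrite ?subr_ge0 ?ltW //.
    by lra.
  have eq' : (eta - 1) + (1 - alpha) = q by rewrite /q addrA subrK.
  have rsplit : powR r (eta - 1) * powR r (1 - alpha) = Rp.
    by rewrite -powR_split eq' // /q subr_eq0 gt_eqF // (lt_trans a1 e1).
  rewrite {1}dsplit.
  have -> : K * phe * (powR del alpha * powR del (1 - alpha)) =
     (K * powR del alpha) * (phe * powR del (1 - alpha)) by ring.
  have -> : 4 * (K * (powR del alpha * Rp)) =
     (K * powR del alpha) * (powR r (eta - 1) * (4 * powR r (1 - alpha))) by rewrite -rsplit; ring.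
  apply: (ler_wpM2l (mulr_ge0 K0 da0)).
  exact: (ler_pM phe0 (powR_ge0 _ _) phr p1).
have Dz' := HDel _ Dz; rewrite -/h -/del -/q in Dz'.
have phd : powR (h + del) q <= 9 * Rp.
  rewrite -h33; apply: (powR_kbound n3 (addr_ge0 h0 del0) _ (ltW r0) q0 q2).
  by lra.
have B3 : cmod (U x z - U y z - P z) <= 9 * (M2 * (powR del alpha * Rp)).
  apply: le_trans Dz' _.
  have -> : 9 * (M2 * (powR del alpha * Rp)) = (M2 * powR del alpha) * (9 * Rp) by ring.
  exact: (ler_wpM2l (mulr_ge0 M20 da0) phd).
rewrite (@eq2_gen _ (U x y) (U y z) (P z) (P y) (U x z) (esym Py)) cmodN; apply: le_trans (cmod3 _ _ _) _.
have n28 : (0:R) <= 28 by lra.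
have n28' : (28:R) <= 30 by lra.
have n25 : (0:R) <= 25 by lra.
have n25' : (25:R) <= 30 by lra.
apply: (fin_bound (c1:=28) (c2:=25) M10 M20 A0 n28 n28' n25 n25').
apply: lin3 => //; first by rewrite mulrCA.
have -> : 6 * (M1 * (powR del alpha * Rp)) + 4 * (M2 * (powR del alpha * Rp)) =
  K * (powR del alpha * Rp) by rewrite /K; ring.
exact: le_trans Pzy bnd3.
Qed.
End Core.

Lemma final_arith (R : realType) (X M1 M2 n sv Rp e' e : R) : 0 <= Rp ->
  M1 < n + e' -> M2 < sv + e' -> X <= 30 * (M1 + M2) * Rp -> 60 * (e' * Rp) = e ->
  X <= 30 * (n + sv) * Rp + e.
Proof.
move=> Rp0 h1 h2 hX he.
have : (M1 + M2) * Rp <= (n + sv + 2 * e') * Rp.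
  by apply: ler_wpM2r => //; lra.
move: hX he; set A := (M1 + M2) * Rp; set B := (n + sv + 2 * e') * Rp.
have -> : 30 * (M1 + M2) * Rp = 30 * A by rewrite /A mulrA.
have -> : 30 * (n + sv) * Rp = 30 * B - 60 * (e' * Rp) by rewrite /B; ring.
lra.
Qed.

Unset Implicit Arguments.
Set Strict Implicit.

Theorem lemma2p5 (R : realType) (d : nat) (s : 'I_d -> nat)
  (hs : forall i, (0 < s i)%N) (alpha eta : R)
  (h0a : 0 < alpha) (ha1 : alpha < 1) (h1e : 1 < eta) (he2 : eta < 2) :
  exists C : R, 0 < C /\
  forall (D : set (pt R d)),
    (forall i : 'I_d, s i = 1%N ->
       forall x y, D x -> D y -> D (y + sdist s x y *: evec R i)) ->
  forall (U : pt R d -> pt R d -> R[i]), is_germ s D U ->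
  forall r : R, 0 < r ->
    (ereal_sup [set Hsemi s alpha (D `&` sball s x r) (U x) | x in D]
      <= C%:E * (Gnorm s eta D U + Gsemi s eta alpha D U)
         * (powR r (eta - alpha))%:E)%E.
Proof.
exists 30; split; first by rewrite ltr0n.
move=> D HD U _ r r0.
have N0 : (0 <= Gnorm s eta D U)%E.
  by apply: le_ereal_inf_tmp => _ [M [M0 _] <-]; rewrite lee_fin ltW.
have S0 : (0 <= Gsemi s eta alpha D U)%E.
  by apply: le_ereal_inf_tmp => _ [M [M0 _] <-]; rewrite lee_fin ltW.
have Rp0 : 0 < powR r (eta - alpha) by exact: powR_gt0.
have oo_case : forall S : \bar R, (0 <= S)%E ->
    (30%:E * (+oo + S) * (powR r (eta - alpha))%:E)%E = +oo%E.
  move=> S S0'; rewrite addye; last by apply: contraTneq S0' => ->.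
  by rewrite mulry gtr0_sg ?ltr0n // mul1e mulyr gtr0_sg // mul1e.
case EN: (Gnorm s eta D U) => [n| |]; last by rewrite EN in N0.
  2: by rewrite oo_case // leey.
case ES: (Gsemi s eta alpha D U) => [sv| |]; last by rewrite ES in S0.
  2: by rewrite addeC oo_case ?leey // -EN.
set Rp := powR r (eta - alpha).
have n0 : 0 <= n by rewrite -lee_fin -EN.
have sv0 : 0 <= sv by rewrite -lee_fin -ES.
rewrite -EFinD -!EFinM.
apply: ge_ereal_sup => _ [x Dx <-].
apply: ge_ereal_sup => _ [y [z [[Dy By] [[Dz Bz] [yz ->]]]]].
rewrite lee_fin; apply/ler_addgt0Pr => e e0.
set e' := e / (60 * Rp).
have e'0 : 0 < e' by rewrite /e' divr_gt0 // mulr_gt0 // ltr0n.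
have he : 60 * (e' * Rp) = e.
  by rewrite /e'; field; rewrite gt_eqF.
have [_ [M1 [M10 HN] <-] lt1] : exists2 y, [set M%:E | M in [set M : R | 0 < M /\
     forall x y, D x -> D y -> cmod (U x y) <= M * powR (sdist s x y) eta]] y &
     (y < Gnorm s eta D U + e'%:E)%E.
  by apply: lb_ereal_inf_adherent => //; move: EN; rewrite /Gnorm => ->.
have [_ [M2 [M20 HS] <-] lt2] : exists2 y, [set M%:E | M in [set M : R | 0 < M /\
     forall x y, D x -> D y -> exists P, is_poly_k s `|Num.floor eta|%N P /\
       forall z, D z -> cmod (U x z - U y z - P z) <=
         M * powR (sdist s y z) alpha * powR (sdist s x y + sdist s y z) (eta - alpha)]] y &
     (y < Gsemi s eta alpha D U + e'%:E)%E.
  by apply: lb_ereal_inf_adherent => //; move: ES; rewrite /Gsemi => ->.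
rewrite EN -EFinD lte_fin in lt1.
rewrite ES -EFinD lte_fin in lt2.
rewrite floor_eta // in HS.
have hc := core hs h0a ha1 h1e he2 (ltW M10) (ltW M20) r0 HD HN HS Dx Dy Dz By Bz.
apply: (final_arith (ltW Rp0) lt1 lt2 _ he).
have [dz|dpos] := eqVneq (powR (sdist s y z) alpha) 0.
  rewrite dz invr0 mulr0; apply: mulr_ge0 (ltW Rp0); apply: mulr_ge0; first by rewrite ler0n.
  by rewrite addr_ge0 // ltW.
rewrite ler_pdivrMr; last by rewrite lt_neqAle eq_sym dpos powR_ge0.
exact: hc.
Qed.
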